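(* Let $T:V\to\mathfrak g$ be an $\mathcal O$-operator on a Lie algebra $\mathfrak g$ with respect to a representation $(V;\rho)$. If $\mathcal Z^1(V,\mathfrak g)=d_{\bar\rho}(\mathrm{Nij}(T))$, then $T$ is rigid.
   Context: An $\mathcal O$-operator: linear $T:V\to\mathfrak g$ with $[Tu,Tv]=T(\rho(Tu)(v)-\rho(Tv)(u))$. $\bar\rho(u)(y)=[Tu,y]+T\rho(y)(u)$; $d_{\bar\rho}y(u)=[Tu,y]+T\rho(y)(u)$ for $y\in\mathfrak g$; $\mathcal Z^1(V,\mathfrak g)$ is the set of linear $f:V\to\mathfrak g$ with $[Tu,f(v)]-[Tv,f(u)]-T(\rho(f(u))(v)-\rho(f(v))(u))-f(\rho(Tu)(v)-\rho(Tv)(u))=0$ for all $u,v$. $\mathrm{Nij}(T)$ is the set of $x\in\mathfrak g$ with $[[x,y],[x,z]]=0$ and $\rho([x,y])\rho(x)=0$ for all $y,z\in\mathfrak g$, and $[x,[Tu,x]+T\rho(x)(u)]=0$ for all $u\in V$. A one-parameter formal deformation of $T$: $T_t=\sum_{i\ge0}\tau_it^i$, $\tau_i\in\mathrm{Hom}(V,\mathfrak g)$, $\tau_0=T$, extended $\mathbb K[[t]]$-linearly, with $[T_t(u),T_t(v)]=T_t(\rho(T_t(u))(v)-\rho(T_t(v))(u))$ in $\mathfrak g[[t]]$. Two formal deformations $\overline T_t,T_t$ are equivalent if there exist $x\in\mathfrak g$, $\phi_i\in\mathfrak{gl}(\mathfrak g)$, $\varphi_i\in\mathfrak{gl}(V)$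 ($i\ge2$) with $\phi_t=\mathrm{Id}_{\mathfrak g}+t\,\mathrm{ad}_x+\sum_{i\ge2}\phi_it^i$, $\varphi_t=\mathrm{Id}_V+t\rho(x)+\sum_{i\ge2}\varphi_it^i$ satisfying $[\phi_t(y),\phi_t(z)]=\phi_t[y,z]$, $T_t\circ\varphi_t=\phi_t\circ\overline T_t$, and $\varphi_t\rho(y)u=\rho(\phi_t(y))\varphi_t(u)$. A formal deformation is trivial if it is equivalent to $T$ (regarded as a deformation of itself), and $T$ is rigid if every one-parameter formal deformation of $T$ is trivial. *)

(* Defs.v *)
(* Lie algebras, representations, O-operators and their
   one-parameter formal deformations, with power series over K[[t]]
   encoded coefficientwise (sequences nat -> ...). *)
From HB Require Import structures.
From mathcomp Require Import all_boot all_algebra.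
Set Implicit Arguments. Unset Strict Implicit. Unset Printing Implicit Defensive.
Import GRing.Theory.
Local Open Scope ring_scope.

Definition is_lin (K : fieldType) (U W : lmodType K) (f : U -> W) : Prop :=
  forall (a : K) (u v : U), f (a *: u + v) = a *: f u + f v.

Definition is_LieAlg (K : fieldType) (g : lmodType K) (br : g -> g -> g) : Prop :=
  [/\ forall z, is_lin (fun x => br x z),
      forall x, is_lin (br x),
      forall x, br x x = 0
    & forall x y z, br x (br y z) + br y (br z x) + br z (br x y) = 0].

Definition is_rep (K : fieldType) (g V : lmodType K) (br : g -> g -> g)
    (rho : g -> V -> V) : Prop :=
  [/\ forall (a : K) x y v, rho (a *: x + y) v = a *: rho x v + rho y v,
      forall x, is_lin (rho x)
    & forall x y v, rho (br x y) v = rho x (rho y v) - rho y (rho x v)].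

Definition is_Ooperator (K : fieldType) (g V : lmodType K) (br : g -> g -> g)
    (rho : g -> V -> V) (T : V -> g) : Prop :=
  is_lin T /\ forall u v, br (T u) (T v) = T (rho (T u) v - rho (T v) u).

Definition dbar (K : fieldType) (g V : lmodType K) (br : g -> g -> g)
    (rho : g -> V -> V) (T : V -> g) (y : g) : V -> g :=
  fun u => br (T u) y + T (rho y u).

Definition Z1 (K : fieldType) (g V : lmodType K) (br : g -> g -> g)
    (rho : g -> V -> V) (T : V -> g) (f : V -> g) : Prop :=
  is_lin f /\
  forall u v, br (T u) (f v) - br (T v) (f u) - T (rho (f u) v - rho (f v) u)
              - f (rho (T u) v - rho (T v) u) = 0.

Definition Nij (K : fieldType) (g V : lmodType K) (br : g -> g -> g)
    (rho : g -> V -> V) (T : V -> g) (x : g) : Prop :=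
  [/\ forall y z, br (br x y) (br x z) = 0,
      forall y v, rho (br x y) (rho x v) = 0
    & forall u, br x (br (T u) x + T (rho x u)) = 0].

(* T_t = sum_i tau i t^i is a one-parameter formal deformation of T;
   the identity in g[[t]] is written coefficientwise (coefficient of t^n). *)
Definition is_deformation (K : fieldType) (g V : lmodType K) (br : g -> g -> g)
    (rho : g -> V -> V) (T : V -> g) (tau : nat -> V -> g) : Prop :=
  [/\ forall u, tau 0%N u = T u,
      forall i, is_lin (tau i)
    & forall (n : nat) u v,
        \sum_(i < n.+1) br (tau i u) (tau (n - i)%N v)
        = \sum_(i < n.+1) tau i (rho (tau (n - i)%N u) v - rho (tau (n - i)%N v) u)].

(* Equivalence of deformations taubar_t and tau_t:
   phi_t = Id + t ad_x + sum_{i>=2} phi_i t^i,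
   vphi_t = Id + t rho(x) + sum_{i>=2} vphi_i t^i, with
   [phi_t y, phi_t z] = phi_t [y,z],  T_t o vphi_t = phi_t o Tbar_t,
   vphi_t (rho(y) u) = rho(phi_t y) (vphi_t u), all coefficientwise. *)
Definition deform_equiv (K : fieldType) (g V : lmodType K) (br : g -> g -> g)
    (rho : g -> V -> V) (taubar tau : nat -> V -> g) : Prop :=
  exists (x : g) (phi : nat -> g -> g) (vphi : nat -> V -> V),
    [/\ (forall y, phi 0%N y = y) /\ (forall y, phi 1%N y = br x y),
        ((forall v, vphi 0%N v = v) /\ (forall v, vphi 1%N v = rho x v))
          /\ ((forall i, is_lin (phi i)) /\ (forall i, is_lin (vphi i))),
        forall (n : nat) y z,
          \sum_(i < n.+1) br (phi i y) (phi (n - i)%N z) = phi n (br y z),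
        forall (n : nat) u,
          \sum_(i < n.+1) tau i (vphi (n - i)%N u)
          = \sum_(i < n.+1) phi i (taubar (n - i)%N u)
      & forall (n : nat) y u,
          vphi n (rho y u) = \sum_(i < n.+1) rho (phi i y) (vphi (n - i)%N u)].

Definition const_deformation (K : fieldType) (g V : lmodType K) (T : V -> g)
    : nat -> V -> g :=
  fun i => if i is 0%N then T else fun _ => 0.

Definition trivial_deformation (K : fieldType) (g V : lmodType K)
    (br : g -> g -> g) (rho : g -> V -> V) (T : V -> g) (tau : nat -> V -> g) : Prop :=
  deform_equiv br rho tau (const_deformation T).

Definition rigid (K : fieldType) (g V : lmodType K) (br : g -> g -> g)
    (rho : g -> V -> V) (T : V -> g) : Prop :=
  forall tau : nat -> V -> g,
    is_deformation br rho T tau -> trivial_deformation br rho T tau.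

(* Main.v *)
Require Import Defs.
From mathcomp Require Import all_boot all_algebra.
From Stdlib Require Import FunctionalExtensionality ClassicalEpsilon.
From mathcomp Require Import zify.
From Stdlib Require Import Lia.
Set Implicit Arguments. Unset Strict Implicit. Unset Printing Implicit Defensive.
Import GRing.Theory.
Local Open Scope ring_scope.
Section CV.
Variable Z : zmodType.

Definition cv (f : nat -> nat -> Z) (n : nat) : Z := \sum_(i < n.+1) f i (n - i)%N.
Definition sh (k : nat) (X : nat -> Z) (n : nat) : Z :=
  if (k <= n)%N then X (n - k)%N else 0.

Lemma cvE f n : cv f n = \sum_(0 <= i < n.+1) f i (n - i)%N.
Proof. by rewrite /cv big_mkord. Qed.

Lemma cvC f n : cv f n = cv (fun i j => f j i) n.
Proof.
rewrite !cvE big_nat_rev /=; apply: eq_big_nat => i /andP[_ hi].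
rewrite add0n subSS subKn //.
Qed.

Lemma cv_shl k h n :
  cv (fun i j => if (k <= i)%N then h (i - k)%N j else 0) n = sh k (cv h) n.
Proof.
rewrite /sh cvE; case: leqP => [kn|nk].
  rewrite (big_cat_nat (leq0n k)) /=; last by apply: leqW.
  rewrite big1_seq ?add0r; last first.
    by move=> i /andP[_]; rewrite mem_index_iota => /andP[_ hi]; rewrite leqNgt hi.
  rewrite -{1}[k]add0n big_addn cvE subSn //.
  apply: eq_big_nat => i /andP[_ hi].
  by rewrite leq_addl addnK subnDA subnAC.
rewrite big_nat big1 => // i /andP[_ hi].
by rewrite leqNgt (leq_ltn_trans _ nk) // -ltnS.
Qed.

Lemma cv_shr k h n :
  cv (fun i j => if (k <= j)%N then h i (j - k)%N else 0) n = sh k (cv h) n.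
Proof.
rewrite cvC /= (cv_shl k (fun i j => h j i)) /sh; case: leqP => // _.
by rewrite -cvC.
Qed.

Lemma cvD f g n : cv (fun i j => f i j + g i j) n = cv f n + cv g n.
Proof. by rewrite /cv big_split. Qed.

Lemma cvN f n : cv (fun i j => - f i j) n = - cv f n.
Proof. by rewrite /cv sumrN. Qed.

Lemma cvB f g n : cv (fun i j => f i j - g i j) n = cv f n - cv g n.
Proof. by rewrite cvD cvN. Qed.

Lemma cv0 n : cv (fun _ _ => 0) n = 0.
Proof. by rewrite /cv big1. Qed.

Lemma cv_ext f g n : (forall i j, f i j = g i j) -> cv f n = cv g n.
Proof. by move=> H; apply: eq_bigr => i _. Qed.

Lemma cv_l0 h n : cv (fun i j => if i == 0%N then h j else 0) n = h n.
Proof. by rewrite /cv big_ord_recl /= subn0 big1 ?addr0. Qed.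

Lemma cv_r0 h n : cv (fun i j => if j == 0%N then h i else 0) n = h n.
Proof. by rewrite cvC cv_l0. Qed.

End CV.

Section Lin.
Variables (K : fieldType) (U W X : lmodType K).

Lemma linD (f : U -> W) : is_lin f -> forall u v, f (u + v) = f u + f v.
Proof. by move=> H u v; rewrite -{1}[u]scale1r H scale1r. Qed.

Lemma lin0 (f : U -> W) : is_lin f -> f 0 = 0.
Proof.
move=> H; have := linD H 0 0; rewrite addr0 => /eqP.
by rewrite eq_sym -subr_eq0 addrK => /eqP.
Qed.

Lemma linN (f : U -> W) : is_lin f -> forall u, f (- u) = - f u.
Proof.
move=> H u; apply/eqP; rewrite -subr_eq0 opprK -linD // addNr lin0 //.
Qed.

Lemma linB (f : U -> W) : is_lin f -> forall u v, f (u - v) = f u - f v.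
Proof. by move=> H u v; rewrite linD // linN. Qed.

Lemma lin_sum (f : U -> W) : is_lin f ->
  forall n (F : nat -> U), f (\sum_(i < n) F i) = \sum_(i < n) f (F i).
Proof.
move=> H n F; apply: (big_morph f (linD H) (lin0 H)).
Qed.

Lemma lin_add (f h : U -> W) : is_lin f -> is_lin h -> is_lin (fun x => f x + h x).
Proof.
move=> Hf Hh a u v; rewrite Hf Hh scalerDr.
by rewrite addrACA.
Qed.

Lemma lin_sub (f h : U -> W) : is_lin f -> is_lin h -> is_lin (fun x => f x - h x).
Proof.
move=> Hf Hh a u v; rewrite Hf Hh scalerBr opprD.
by rewrite addrACA.
Qed.

Lemma lin_comp (f : W -> X) (h : U -> W) : is_lin f -> is_lin h -> is_lin (fun x => f (h x)).
Proof. by move=> Hf Hh a u v; rewrite Hh Hf. Qed.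

Lemma lin_zero : is_lin (fun _ : U => (0 : W)).
Proof. by move=> a u v; rewrite scaler0 addr0. Qed.

Lemma lin_id : is_lin (fun x : U => x).
Proof. by []. Qed.

Lemma lin_cv (f : U -> W) : is_lin f ->
  forall h n, f (cv h n) = cv (fun i j => f (h i j)) n.
Proof. by move=> H h n; rewrite /cv; apply: big_morph; [exact: linD|exact: lin0]. Qed.

End Lin.

Section SH.
Implicit Types Z : zmodType.

Lemma sh_map (Z1 Z2 : zmodType) k (f : Z1 -> Z2) (X : nat -> Z1) n :
  f 0 = 0 -> f (sh k X n) = sh k (fun m => f (X m)) n.
Proof. by rewrite /sh => H; case: ifP. Qed.

Lemma shD Z k (X Y : nat -> Z) n : sh k (fun m => X m + Y m) n = sh k X n + sh k Y n.
Proof. by rewrite /sh; case: ifP => _ //; rewrite addr0. Qed.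

Lemma shN Z k (X : nat -> Z) n : sh k (fun m => - X m) n = - sh k X n.
Proof. by rewrite /sh; case: ifP => _ //; rewrite oppr0. Qed.

Lemma shB Z k (X Y : nat -> Z) n : sh k (fun m => X m - Y m) n = sh k X n - sh k Y n.
Proof. by rewrite shD shN. Qed.

Lemma sh_zero Z k n : sh k (fun _ => 0 : Z) n = 0.
Proof. by rewrite /sh; case: ifP. Qed.

Lemma sh_ext Z k (X Y : nat -> Z) n : (forall m, X m = Y m) -> sh k X n = sh k Y n.
Proof. by move=> H; rewrite /sh; case: ifP. Qed.

Lemma cv_addshr (Y Z : zmodType) (F : nat -> Y -> Z) k (B B' : nat -> Y) n :
  (forall i, F i 0 = 0) -> (forall i x y, F i (x + y) = F i x + F i y) ->
  cv (fun i j => F i (B j + sh k B' j)) n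
  = cv (fun i j => F i (B j)) n + sh k (cv (fun i j => F i (B' j))) n.
Proof.
move=> H0 HD; rewrite -cv_shr -cvD; apply: cv_ext => i j.
by rewrite HD /sh; case: ifP => _ //; rewrite H0.
Qed.

Lemma cv_addshl (Y Z : zmodType) (F : nat -> Y -> Z) k (A A' : nat -> Y) n :
  (forall i, F i 0 = 0) -> (forall i x y, F i (x + y) = F i x + F i y) ->
  cv (fun i j => F j (A i + sh k A' i)) n
  = cv (fun i j => F j (A i)) n + sh k (cv (fun i j => F j (A' i))) n.
Proof.
move=> H0 HD; rewrite -cv_shl -cvD; apply: cv_ext => i j.
by rewrite HD /sh; case: ifP => _ //; rewrite H0.
Qed.

End SH.

Lemma cv4 (X Y Z : zmodType) (F : X -> Y -> Z) k A A' B B' n :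
  (forall y, F 0 y = 0) -> (forall x, F x 0 = 0) ->
  (forall x x' y, F (x + x') y = F x y + F x' y) ->
  (forall x y y', F x (y + y') = F x y + F x y') ->
  cv (fun i j => F (A i + sh k A' i) (B j + sh k B' j)) n =
  cv (fun i j => F (A i) (B j)) n + sh k (cv (fun i j => F (A i) (B' j))) n
  + sh k (cv (fun i j => F (A' i) (B j))) n
  + sh k (fun m => sh k (cv (fun i j => F (A' i) (B' j))) m) n.
Proof.
move=> H0l H0r HDl HDr.
rewrite (@cv_addshl _ _ (fun j x => F x (B j + sh k B' j))) //=.
rewrite (@cv_addshr _ _ (fun i y => F (A i) y)) //=.
have E : sh k (cv (fun i j => F (A' i) (B j + sh k B' j))) n =
    sh k (cv (fun i j => F (A' i) (B j))) n
    + sh k (fun m => sh k (cv (fun i j => F (A' i) (B' j))) m) n.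
  rewrite -shD; apply: sh_ext => m.
  by rewrite (@cv_addshr _ _ (fun i y => F (A' i) y)).
by rewrite E !addrA.
Qed.

Section Solve.
Variables (X : Type) (k : nat) (B0 : nat -> X) (C : nat -> X -> X).
Fixpoint solv (fuel m : nat) : X :=
  match fuel with
  | 0 => B0 m
  | f.+1 => if (k <= m)%N then C m (solv f (m - k)) else B0 m
  end.
Definition sol m := solv m.+1 m.

Lemma solv_eq : (0 < k)%N -> forall f1 f2 m, (m < f1)%N -> (m < f2)%N ->
  solv f1 m = solv f2 m.
Proof.
move=> Hk; elim=> [|f1 IH] [|f2] m //= h1 h2.
case: ifP => km //; congr (C m _); apply: IH; lia.
Qed.

Lemma sol_eq : (0 < k)%N -> forall m,
  sol m = if (k <= m)%N then C m (sol (m - k)) else B0 m.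
Proof.
move=> Hk m; rewrite {1}/sol /=; case: ifP => // km; congr (C m _).
rewrite /sol; apply: solv_eq => //; lia.
Qed.
End Solve.

Section Lie.
Variables (K : fieldType) (g V : lmodType K) (br : g -> g -> g)
  (rho : g -> V -> V) (T : V -> g).
Hypothesis HL : is_LieAlg br.
Hypothesis HR : is_rep br rho.

Lemma brLlin z : is_lin (fun x => br x z). Proof. by case: HL. Qed.
Lemma brRlin x : is_lin (br x). Proof. by case: HL. Qed.
Lemma brDl x x' z : br (x + x') z = br x z + br x' z.
Proof. exact: (linD (brLlin z)). Qed.
Lemma brDr x z z' : br x (z + z') = br x z + br x z'.
Proof. exact: (linD (brRlin x)). Qed.
Lemma br0l z : br 0 z = 0. Proof. exact: (lin0 (brLlin z)). Qed.
Lemma br0r x : br x 0 = 0. Proof. exact: (lin0 (brRlin x)). Qed.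
Lemma brNl x z : br (- x) z = - br x z. Proof. exact: (linN (brLlin z)). Qed.
Lemma brNr x z : br x (- z) = - br x z. Proof. exact: (linN (brRlin x)). Qed.
Lemma brBl x x' z : br (x - x') z = br x z - br x' z.
Proof. exact: (linB (brLlin z)). Qed.
Lemma brBr x z z' : br x (z - z') = br x z - br x z'.
Proof. exact: (linB (brRlin x)). Qed.

Lemma br_anti a b : br a b = - br b a.
Proof.
case: HL => _ _ Hxx _.
have := Hxx (a + b); rewrite brDl !brDr !Hxx add0r addr0 => /eqP.
by rewrite addr_eq0 => /eqP.
Qed.

Lemma br_jac y p q : br y (br p q) = br (br y p) q + br p (br y q).
Proof.
case: HL => _ _ _ HJ.
have := HJ y p q; rewrite (br_anti q y) brNr (br_anti q (br y p)) => /eqP.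
rewrite -addrA addr_eq0 => /eqP ->.
by rewrite opprD !opprK addrC.
Qed.

Lemma rhoDl x x' v : rho (x + x') v = rho x v + rho x' v.
Proof. by case: HR => H _ _; rewrite -{1}[x]scale1r H scale1r. Qed.
Lemma rhoRlin x : is_lin (rho x). Proof. by case: HR. Qed.
Lemma rho0l v : rho 0 v = 0.
Proof.
have := rhoDl 0 0 v; rewrite addr0 => /eqP.
by rewrite eq_sym -subr_eq0 addrK => /eqP.
Qed.
Lemma rhoNl x v : rho (- x) v = - rho x v.
Proof.
apply/eqP; rewrite -subr_eq0 opprK -rhoDl addNr rho0l //.
Qed.
Lemma rhoBl x x' v : rho (x - x') v = rho x v - rho x' v.
Proof. by rewrite rhoDl rhoNl. Qed.
Lemma rhoDr x v w : rho x (v + w) = rho x v + rho x w.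
Proof. exact: (linD (rhoRlin x)). Qed.
Lemma rho0r x : rho x 0 = 0. Proof. exact: (lin0 (rhoRlin x)). Qed.
Lemma rhoBr x v w : rho x (v - w) = rho x v - rho x w.
Proof. exact: (linB (rhoRlin x)). Qed.
Lemma rho_br x y v : rho (br x y) v = rho x (rho y v) - rho y (rho x v).
Proof. by case: HR. Qed.

Lemma cv_shl' (Z : zmodType) k (h : nat -> nat -> Z) n :
  cv (fun i j => sh k (fun l => h l j) i) n = sh k (cv h) n.
Proof. by rewrite -cv_shl. Qed.

Lemma cv_shr' (Z : zmodType) k (h : nat -> nat -> Z) n :
  cv (fun i j => sh k (fun l => h i l) j) n = sh k (cv h) n.
Proof. by rewrite -cv_shr. Qed.

Lemma sh_lt0 (Z : zmodType) k (X : nat -> Z) n : (0 < k)%N ->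
  (forall m, (m < n)%N -> X m = 0) -> sh k X n = 0.
Proof.
move=> Hk H; rewrite /sh; case: ifP => // kn; apply: H.
by rewrite ltn_subrL Hk (leq_trans Hk kn).
Qed.

Lemma sh_zero_ext (Z : zmodType) k (X : nat -> Z) n :
  (forall m, X m = 0) -> sh k X n = 0.
Proof. by move=> H; rewrite /sh; case: ifP. Qed.

Section Nij.
Variables (y : g) (k : nat).
Hypothesis Hy : Nij br rho T y.
Hypothesis Hk : (0 < k)%N.

Definition psi (X : nat -> g) n := X n + sh k (fun m => br y (X m)) n.
Definition chi (W : nat -> V) n := W n + sh k (fun m => rho y (W m)) n.

Lemma psiB X Y n : psi (fun m => X m - Y m) n = psi X n - psi Y n.
Proof.
rewrite /psi (@sh_ext _ k _ (fun m => br y (X m) - br y (Y m))); last first.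
  by move=> m; rewrite brBr.
by rewrite shB opprD addrACA.
Qed.

Lemma chiB X Y n : chi (fun m => X m - Y m) n = chi X n - chi Y n.
Proof.
rewrite /chi (@sh_ext _ k _ (fun m => rho y (X m) - rho y (Y m))); last first.
  by move=> m; rewrite rhoBr.
by rewrite shB opprD addrACA.
Qed.

Lemma psi0 n : psi (fun _ => 0) n = 0.
Proof.
rewrite /psi (@sh_ext _ k _ (fun _ => 0)) ?sh_zero ?addr0 // => m.
by rewrite br0r.
Qed.

Lemma L1 a b n :
  cv (fun i j => br (psi a i) (psi b j)) n = psi (cv (fun i j => br (a i) (b j))) n.
Proof.
case: Hy => N1 N2 N3.
rewrite /psi (cv4 (F := br)); [|exact: br0l|exact: br0r|exact: brDl|exact: brDr].
have -> : sh k (fun m => sh k (cv (fun i j => br (br y (a i)) (br y (b j)))) m) n = 0.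
  apply: sh_zero_ext => m; apply: sh_zero_ext => l.
  by rewrite (@cv_ext _ _ (fun _ _ => 0)) ?cv0.
rewrite addr0 -addrA -shD; congr (_ + _); apply: sh_ext => m.
rewrite -cvD (lin_cv (brRlin y)); apply: cv_ext => i j.
by rewrite (br_jac y) addrC.
Qed.

Lemma L2 a W n :
  cv (fun i j => rho (psi a i) (chi W j)) n = chi (cv (fun i j => rho (a i) (W j))) n.
Proof.
case: Hy => N1 N2 N3.
rewrite /psi /chi (cv4 (F := rho)); [|exact: rho0l|exact: rho0r|exact: rhoDl|exact: rhoDr].
have -> : sh k (fun m => sh k (cv (fun i j => rho (br y (a i)) (rho y (W j)))) m) n = 0.
  apply: sh_zero_ext => m; apply: sh_zero_ext => l.
  by rewrite (@cv_ext _ _ (fun _ _ => 0)) ?cv0.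
rewrite addr0 -addrA -shD; congr (_ + _); apply: sh_ext => m.
rewrite -cvD (lin_cv (rhoRlin y)); apply: cv_ext => i j.
by rewrite rho_br addrC subrK.
Qed.

Definition related (S S' : nat -> V -> g) :=
  forall m w, S' m w + sh k (fun l => S' l (rho y w)) m
              = S m w + sh k (fun l => br y (S l w)) m.

Lemma L3 (S S' : nat -> V -> g) : (forall i, is_lin (S' i)) -> related S S' ->
  forall U n, cv (fun i j => S' i (chi U j)) n = psi (cv (fun i j => S i (U j))) n.
Proof.
move=> HS' HRel U n.
rewrite /chi (cv_addshr (F := S')); [|by move=> i; exact: lin0|by move=> i; exact: linD].
rewrite (@cv_ext _ _ (fun i j => S i (U j) + sh k (fun l => br y (S l (U j))) i
            - sh k (fun l => S' l (rho y (U j))) i)); last first.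
  by move=> i j; rewrite -HRel addrK.
rewrite cvB cvD cv_shl' cv_shl' subrK /psi; congr (_ + _); apply: sh_ext => m.
by rewrite (lin_cv (brRlin y)).
Qed.

End Nij.


Definition AS (S : nat -> V -> g) (U : nat -> V) n := cv (fun i j => S i (U j)) n.
Definition MC (S : nat -> V -> g) (U W : nat -> V) n :=
  cv (fun i j => br (AS S U i) (AS S W j)) n
  - AS S (fun m => cv (fun a b => rho (AS S U a) (W b)) m
                   - cv (fun a b => rho (AS S W a) (U b)) m) n.
Definition delta (u : V) (m : nat) : V := if m == 0%N then u else 0.

Lemma AS_sh S k (U U' : nat -> V) : (forall i, is_lin (S i)) ->
  AS S (fun m => U m + sh k U' m) = fun m => AS S U m + sh k (AS S U') m.
Proof.
move=> HS; apply: functional_extensionality => m.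
by rewrite /AS (cv_addshr (F := S)) // => i; [exact: lin0|exact: linD].
Qed.

Lemma MC_shl S k (U U' W : nat -> V) n : (forall i, is_lin (S i)) ->
  MC S (fun m => U m + sh k U' m) W n = MC S U W n + sh k (MC S U' W) n.
Proof.
move=> HS; rewrite /MC AS_sh //.
rewrite (cv_addshl (F := fun j x => br x (AS S W j))) /=; last first.
  by move=> i x x'; rewrite brDl. by move=> i; rewrite br0l.
set Z1 := fun m => cv (fun a b => rho (AS S U a) (W b)) m
                   - cv (fun a b => rho (AS S W a) (U b)) m.
set Z2 := fun m => cv (fun a b => rho (AS S U' a) (W b)) m
                   - cv (fun a b => rho (AS S W a) (U' b)) m.
have -> : (fun m => cv (fun a b => rho (AS S U a + sh k (AS S U') a) (W b)) m
       - cv (fun a b => rho (AS S W a) (U b + sh k U' b)) m)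
     = fun m => Z1 m + sh k Z2 m.
  apply: functional_extensionality => m.
  rewrite (cv_addshl (F := fun j x => rho x (W j))) /=; last first.
    by move=> i x x'; rewrite rhoDl. by move=> i; rewrite rho0l.
  rewrite (cv_addshr (F := fun i x => rho (AS S W i) x)) /=; last first.
    by move=> i x x'; rewrite rhoDr. by move=> i; rewrite rho0r.
  by rewrite /Z1 /Z2 shB opprD addrACA.
rewrite AS_sh // shB opprD addrACA.
done.
Qed.

Lemma MC_shr S k (U W W' : nat -> V) n : (forall i, is_lin (S i)) ->
  MC S U (fun m => W m + sh k W' m) n = MC S U W n + sh k (MC S U W') n.
Proof.
move=> HS; rewrite /MC AS_sh //.
rewrite (cv_addshr (F := fun i x => br (AS S U i) x)) /=; last first.
  by move=> i x x'; rewrite brDr. by move=> i; rewrite br0r.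
set Z1 := fun m => cv (fun a b => rho (AS S U a) (W b)) m
                   - cv (fun a b => rho (AS S W a) (U b)) m.
set Z2 := fun m => cv (fun a b => rho (AS S U a) (W' b)) m
                   - cv (fun a b => rho (AS S W' a) (U b)) m.
have -> : (fun m => cv (fun a b => rho (AS S U a) (W b + sh k W' b)) m
       - cv (fun a b => rho (AS S W a + sh k (AS S W') a) (U b)) m)
     = fun m => Z1 m + sh k Z2 m.
  apply: functional_extensionality => m.
  rewrite (cv_addshl (F := fun j x => rho x (U j))) /=; last first.
    by move=> i x x'; rewrite rhoDl. by move=> i; rewrite rho0l.
  rewrite (cv_addshr (F := fun i x => rho (AS S U i) x)) /=; last first.
    by move=> i x x'; rewrite rhoDr. by move=> i; rewrite rho0r.
  by rewrite /Z1 /Z2 shB opprD addrACA.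
rewrite AS_sh // shB opprD addrACA.
done.
Qed.

Lemma AS_delta S u : (forall i, is_lin (S i)) -> AS S (delta u) = fun m => S m u.
Proof.
move=> HS; apply: functional_extensionality => m.
rewrite /AS -(cv_r0 (fun i => S i u) m); apply: cv_ext => i j.
by rewrite /delta; case: eqP => // _; exact: lin0.
Qed.

Lemma MC_delta S u v n : (forall i, is_lin (S i)) ->
  MC S (delta u) (delta v) n =
  cv (fun i j => br (S i u) (S j v)) n
  - cv (fun i j => S i (rho (S j u) v - rho (S j v) u)) n.
Proof.
move=> HS; rewrite /MC !AS_delta //.
have E : forall (w : V) (a : nat -> g) m,
    cv (fun i j => rho (a i) (delta w j)) m = rho (a m) w.
  move=> w a m; rewrite -(cv_r0 (fun i => rho (a i) w) m); apply: cv_ext => i j.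
  by rewrite /delta; case: eqP => // _; rewrite rho0r.
by rewrite /AS; congr (_ - _); apply: cv_ext => i j; rewrite !E.
Qed.

Lemma MC_chi y k S S' U W n : Nij br rho T y -> (0 < k)%N ->
  (forall i, is_lin (S' i)) -> related y k S S' ->
  MC S' (chi y k U) (chi y k W) n = psi y k (MC S U W) n.
Proof.
move=> Hy Hk HS' Hrel.
have E1 : forall X, AS S' (chi y k X) = psi y k (AS S X).
  by move=> X; apply: functional_extensionality => m; rewrite /AS (L3 HS' Hrel).
rewrite /MC !E1 (L1 _ Hy).
have -> : (fun m => cv (fun a b => rho (psi y k (AS S U) a) (chi y k W b)) m
    - cv (fun a b => rho (psi y k (AS S W) a) (chi y k U b)) m)
  = chi y k (fun m => cv (fun a b => rho (AS S U a) (W b)) m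
    - cv (fun a b => rho (AS S W a) (U b)) m).
  apply: functional_extensionality => m.
  by rewrite !(L2 _ Hy) chiB.
by rewrite E1 psiB.
Qed.

Lemma chi_delta y k u :
  chi y k (delta u) = fun m => delta u m + sh k (delta (rho y u)) m.
Proof.
apply: functional_extensionality => m; rewrite /chi; congr (_ + _).
by apply: sh_ext => l; rewrite /delta; case: eqP => // _; rewrite rho0r.
Qed.

Lemma def_transfer y k S S' : Nij br rho T y -> (0 < k)%N ->
  (forall i, is_lin (S' i)) -> related y k S S' ->
  (forall n u v, MC S (delta u) (delta v) n = 0) ->
  forall n u v, MC S' (delta u) (delta v) n = 0.
Proof.
move=> Hy Hk HS' Hrel HS.
elim/ltn_ind => n IH u v.
have H := @MC_chi y k S S' (delta u) (delta v) n Hy Hk HS' Hrel.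
have E0 : MC S (delta u) (delta v) = fun _ => 0.
  by apply: functional_extensionality => m; rewrite HS.
rewrite E0 psi0 !chi_delta MC_shl // MC_shr // in H.
rewrite (sh_lt0 Hk (X := MC S' (delta u) (delta (rho y v)))) in H; last first.
  by move=> m hm; apply: IH.
rewrite (sh_lt0 Hk (X := MC S' (delta (rho y u)) _)) in H; last first.
  move=> m hm; rewrite MC_shr // IH // add0r.
  apply: sh_lt0 => // m' hm'; apply: IH; exact: ltn_trans hm' hm.
by rewrite !addr0 in H.
Qed.

Lemma sum_ends (Z : zmodType) k (F : nat -> Z) :
  (forall i, (0 < i < k.+1)%N -> F i = 0) -> \sum_(i < k.+2) F i = F 0%N + F k.+1.
Proof.
move=> H; rewrite big_ord_recl big_ord_recr big1 /= ?add0r // => i _.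
by apply: H; have := ltn_ord i; rewrite /bump /=; lia.
Qed.

Lemma MC_def S : (forall i, is_lin (S i)) ->
  (forall n u v, MC S (delta u) (delta v) n = 0) <->
  (forall n u v, \sum_(i < n.+1) br (S i u) (S (n - i)%N v)
        = \sum_(i < n.+1) S i (rho (S (n - i)%N u) v - rho (S (n - i)%N v) u)).
Proof.
move=> HS; split=> H n u v.
  by apply/eqP; rewrite -subr_eq0; have := H n u v; rewrite MC_delta // => ->.
by rewrite MC_delta //; apply/eqP; rewrite subr_eq0; apply/eqP; exact: H.
Qed.

Lemma low_cocycle S k : is_deformation br rho T S -> (0 < k)%N ->
  (forall j, (0 < j < k)%N -> forall u, S j u = 0) -> Z1 br rho T (S k).
Proof.
case=> H0 Hlin Heq Hk Hlow; split; first exact: Hlin.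
move=> u v; case: k Hk Hlow => // k _ Hlow.
have E := Heq k.+1 u v.
rewrite (sum_ends (F := fun i => br (S i u) (S (k.+1 - i)%N v))) in E; last first.
  by move=> i hi; rewrite Hlow ?br0l.
rewrite (sum_ends (F := fun i => S i (rho (S (k.+1 - i)%N u) v - rho (S (k.+1 - i)%N v) u))) in E; last first.
  by move=> i hi; rewrite Hlow ?(lin0 (Hlin i)).
move: E; rewrite /= !subn0 !subnn !H0.
rewrite (br_anti (S k.+1 u)) => E.
by apply/eqP; rewrite -addrA -opprD subr_eq0 E.
Qed.



Record st := St { sx : g; sphi : nat -> g -> g; svphi : nat -> V -> V;
                  ssig : nat -> V -> g }.

Definition Inv (tau : nat -> V -> g) k s : Prop :=
 [/\ (forall z, sphi s 0 z = z) /\ (forall w, svphi s 0 w = w),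
     (forall z, sphi s 1 z = if (1 < k)%N then br (sx s) z else 0) /\
     (forall w, svphi s 1 w = if (1 < k)%N then rho (sx s) w else 0),
     (forall i, is_lin (sphi s i)) /\ (forall i, is_lin (svphi s i)),
     (forall n a b, cv (fun i j => br (sphi s i a) (sphi s j b)) n = sphi s n (br a b)) /\
     (forall n a u, svphi s n (rho a u) = cv (fun i j => rho (sphi s i a) (svphi s j u)) n)
   & [/\ forall n u, cv (fun i j => ssig s i (svphi s j u)) n
                     = cv (fun i j => sphi s i (tau j u)) n,
        forall i, is_lin (ssig s i),
        forall u, ssig s 0 u = T u,
        forall n u v, MC (ssig s) (delta u) (delta v) n = 0
      & forall j, (0 < j < k)%N -> forall u, ssig s j u = 0]].

Lemma lin_sh (U W : lmodType K) k (F : nat -> U -> W) m :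
  (forall l, is_lin (F l)) -> is_lin (fun z => sh k (fun l => F l z) m).
Proof. by move=> HF; rewrite /sh; case: (k <= m)%N; [exact: HF|exact: lin_zero]. Qed.

Lemma L4 y k (h : nat -> nat -> g) n :
  cv (fun i j => psi y k (fun m => h m j) i) n = psi y k (cv h) n.
Proof.
rewrite /psi cvD cv_shl'; congr (_ + _); apply: sh_ext => m.
by rewrite (lin_cv (brRlin y)).
Qed.

Hypothesis HZ : forall f : V -> g,
  Z1 br rho T f <-> exists2 x : g, Nij br rho T x & f =1 dbar br rho T x.

Lemma step tau k s : (0 < k)%N -> Inv tau k s ->
  exists s', Inv tau k.+1 s' /\
    (forall n, (n < k)%N -> (forall z, sphi s' n z = sphi s n z) /\
                           (forall w, svphi s' n w = svphi s n w)).
Proof.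
move=> Hk [[P0 V0] [P1 V1] [Plin Vlin] [PM VM] [Hs Slin S0 SMC Slow]].
have Hdef : is_deformation br rho T (ssig s).
  by split=> //; apply/(MC_def Slin).
have [y Hy Hdy] := (HZ (ssig s k)).1 (low_cocycle Hdef Hk Slow).
pose P m w := psi y k (fun l => ssig s l w) m.
pose sig' := sol k (fun m => P m) (fun m s0 => fun w => P m w - s0 (rho y w)).
have sigE : forall m, sig' m = if (k <= m)%N then (fun w => P m w - sig' (m - k)%N (rho y w)) else P m.
  by move=> m; rewrite /sig' sol_eq.
have Plin' : forall m, is_lin (P m).
  move=> m; apply: lin_add => //; apply: (@lin_sh _ _ k (fun l w => br y (ssig s l w)) m).
  by move=> l; apply: lin_comp => //; exact: brRlin.
have sig'lin : forall m, is_lin (sig' m).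
  elim/ltn_ind=> m IH; rewrite sigE; case: ifP => km //.
  apply: lin_sub => //; apply: lin_comp; last exact: rhoRlin.
  by apply: IH; lia.
have Hrel : related y k (ssig s) sig'.
  move=> m w; rewrite sigE /sh; case: (leqP k m) => km /=.
    by rewrite subrK /P /psi /sh km.
  by rewrite /P /psi /sh leqNgt km /= addr0.
exists (St (if k == 1%N then y else sx s)
           (fun n z => psi y k (fun m => sphi s m z) n)
           (fun n w => chi y k (fun m => svphi s m w) n) sig').
split; last first.
  move=> n nk; split=> z /=; rewrite /psi /chi /sh ifN -?ltnNge // addr0 //.
split=> /=.
- split=> z; rewrite /psi /chi /sh; case: ifP => //; first by rewrite leqNgt Hk.
    by rewrite addr0 P0.
  by rewrite leqNgt Hk.
  by rewrite addr0 V0.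
- split=> z; rewrite /psi /chi /sh.
    case: eqP => [k1|/eqP k1] /=; first by subst k; rewrite P1 /= P0 add0r.
    have k2 : (1 < k)%N by lia.
    rewrite ifN; last by rewrite -ltnNge.
    by rewrite addr0 P1 k2 ltnS (ltnW k2).
  case: eqP => [k1|/eqP k1] /=; first by subst k; rewrite V1 /= V0 add0r.
  have k2 : (1 < k)%N by lia.
  rewrite ifN; last by rewrite -ltnNge.
  by rewrite addr0 V1 k2 ltnS (ltnW k2).
- split=> i.
    apply: lin_add => //; apply: (@lin_sh _ _ k (fun l w => br y (sphi s l w)) i).
    by move=> l; apply: lin_comp => //; exact: brRlin.
  apply: lin_add => //; apply: (@lin_sh _ _ k (fun l w => rho y (svphi s l w)) i).
  by move=> l; apply: lin_comp => //; exact: rhoRlin.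
- split=> n a b.
    rewrite (L1 _ Hy); congr (psi y k _ n).
    by apply: functional_extensionality => m; rewrite PM.
  rewrite (L2 _ Hy); congr (chi y k _ n).
  by apply: functional_extensionality => m; rewrite VM.
- split.
  + move=> n u; rewrite (L3 sig'lin Hrel) L4; congr (psi y k _ n).
    by apply: functional_extensionality => m; rewrite Hs.
  + exact: sig'lin.
  + by move=> u; rewrite sigE ifN -?ltnNge // /P /psi /sh ifN -?ltnNge // addr0 S0.
  + exact: (def_transfer Hy Hk sig'lin Hrel SMC).
  + move=> j /andP[j0 jk]; rewrite ltnS leq_eqVlt in jk.
    case/orP: jk => [/eqP ->|jk] u.
      rewrite sigE leqnn subnn /P /psi /sh leqnn subnn Hdy /dbar !S0.
      rewrite sigE ifN -?ltnNge // /P /psi /sh ifN -?ltnNge // addr0 S0.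
      by rewrite (br_anti (T u) y) addrAC addrK addNr.
    rewrite sigE ifN -?ltnNge // /P /psi /sh ifN -?ltnNge // addr0 Slow //.
    by rewrite j0.
Qed.

Lemma init_inv tau : is_deformation br rho T tau ->
  Inv tau 1 (St 0 (fun n z => if n == 0%N then z else 0)
                 (fun n w => if n == 0%N then w else 0) tau).
Proof.
case=> H0 Hlin Heq; split=> /=.
- by split.
- by split.
- by split=> i; case: (i == 0%N); [exact: lin_id|exact: lin_zero|exact: lin_id|exact: lin_zero].
- split=> n a b.
    rewrite (@cv_ext _ _ (fun i j => if i == 0%N then (if j == 0%N then br a b else 0) else 0)).
      by rewrite (cv_l0 (fun j => if j == 0%N then br a b else 0)).
    by move=> i j; case: (i == 0%N); case: (j == 0%N); rewrite ?br0l ?br0r.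
  rewrite (@cv_ext _ _ (fun i j => if i == 0%N then (if j == 0%N then rho a b else 0) else 0)).
    by rewrite (cv_l0 (fun j => if j == 0%N then rho a b else 0)).
  by move=> i j; case: (i == 0%N); case: (j == 0%N); rewrite ?rho0l ?rho0r.
- split => //.
  + move=> n u; rewrite (cv_l0 (fun j => tau j u)).
    rewrite (@cv_ext _ _ (fun i j => if j == 0%N then tau i u else 0)).
      by rewrite (cv_r0 (fun i => tau i u)).
    by move=> i j; case: (j == 0%N) => //; rewrite (lin0 (Hlin i)).
  + by apply/(MC_def Hlin).
  + by move=> j /andP[j0 j1]; lia.
Qed.

Lemma rigid_main : rigid br rho T.
Proof.
move=> tau Htau.
have step' : forall k s, exists s', (0 < k)%N -> Inv tau k s ->
    Inv tau k.+1 s' /\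
    (forall n, (n < k)%N -> (forall z, sphi s' n z = sphi s n z) /\
                           (forall w, svphi s' n w = svphi s n w)).
  move=> k s; case: (classic ((0 < k)%N /\ Inv tau k s)) => [[hk hi]|hn].
    by have [s' Hs'] := step hk hi; exists s'.
  by exists s => hk hi; case: hn.
pose f k s := proj1_sig (constructive_indefinite_description _ (step' k s)).
have Hf := fun k s => proj2_sig (constructive_indefinite_description _ (step' k s)).
pose s0 := St 0 (fun n z => if n == 0%N then z else 0)
                (fun n w => if n == 0%N then w else 0) tau.
pose D := fix D n := match n with 0 => s0 | m.+1 => f m.+1 (D m) end.
have HD : forall m, Inv tau m.+1 (D m).
  elim=> [|m IH]; first exact: init_inv.
  exact: (Hf m.+1 (D m) (ltn0Sn _) IH).1.
have Hag : forall m d n, (n <= m)%N ->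
    (forall z, sphi (D (m + d)%N) n z = sphi (D m) n z) /\
    (forall w, svphi (D (m + d)%N) n w = svphi (D m) n w).
  move=> m; elim=> [|d IH] n hn; first by rewrite addn0.
  have AB : forall n, (n < (m + d).+1)%N ->
      (forall z, sphi (D (m + d)%N.+1) n z = sphi (D (m + d)%N) n z) /\
      (forall w, svphi (D (m + d)%N.+1) n w = svphi (D (m + d)%N) n w)
    := (Hf _ _ (ltn0Sn _) (HD (m + d)%N)).2.
  have [A B] := AB n ltac:(lia).
  have [A' B'] := IH n hn.
  by rewrite addnS; split=> z; [rewrite A A'|rewrite B B'].
have Ephi : forall n i, (i <= n)%N -> forall z, sphi (D i) i z = sphi (D n) i z.
  move=> n i hi z; have := (Hag i (n - i)%N i (leqnn i)).1 z.
  by rewrite subnKC // => ->.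
have Evphi : forall n i, (i <= n)%N -> forall w, svphi (D i) i w = svphi (D n) i w.
  move=> n i hi z; have := (Hag i (n - i)%N i (leqnn i)).2 z.
  by rewrite subnKC // => ->.
exists (sx (D 1%N)), (fun n z => sphi (D n) n z), (fun n w => svphi (D n) n w).
have [[P0 V0] _ _ _ _] := HD 0%N.
have [_ [P1 V1] _ _ _] := HD 1%N.
split.
- by split=> z; [exact: P0|exact: P1].
- split; first by split=> z; [exact: V0|exact: V1].
  by split=> i; have [_ _ [Pl Vl] _ _] := HD i.
- move=> n a b; have [_ _ _ [PM _] _] := HD n.
  rewrite -PM /cv; apply: eq_bigr => i _.
  have hi : (i <= n)%N by rewrite -ltnS.
  by rewrite (Ephi n i hi) (Ephi n (n - i)%N (leq_subr _ _)).
- move=> n u; have [_ _ _ _ [Hs _ S0 _ Slow]] := HD n.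
  rewrite big_ord_recl big1 /=; last by move=> i _.
  rewrite addr0 subn0.
  transitivity (cv (fun i j => sphi (D n) i (tau j u)) n); last first.
    apply: eq_bigr => i _.
    have hi : (i <= n)%N by rewrite -ltnS.
    by rewrite (Ephi n i hi).
  rewrite -Hs /cv big_ord_recl big1 /=.
    by rewrite addr0 S0 subn0.
  move=> i _; apply: Slow; rewrite /bump /=; have := ltn_ord i; lia.
- move=> n a u; have [_ _ _ [_ VM] _] := HD n.
  rewrite VM /cv; apply: eq_bigr => i _.
  have hi : (i <= n)%N by rewrite -ltnS.
  by rewrite (Ephi n i hi) (Evphi n (n - i)%N (leq_subr _ _)).
Qed.

End Lie.

Theorem proposition5p9 (K : fieldType) (g V : lmodType K)
    (br : g -> g -> g) (rho : g -> V -> V) (T : V -> g) :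
  is_LieAlg br -> is_rep br rho -> is_Ooperator br rho T ->
  (forall f : V -> g,
     Z1 br rho T f <-> exists2 x : g, Nij br rho T x & f =1 dbar br rho T x) ->
  rigid br rho T.
Proof.
move=> HL HR _ HZ; exact: (rigid_main HL HR HZ).
Qed.
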